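(* Let $L>0,\alpha>0$. There exists a constant $F>0$ such that for any $\lambda\ge0$ and any $b\in\Lambda(\alpha)$, the principal eigenfunction $\psi\in E_L$ of $-L_{\lambda,b}$ satisfies $\max\psi/\min\psi\le F$.
   Context: $\Lambda(\alpha)$: $b\in C^1(\mathbb R)$, $b\ge0$, $L$-periodic, $\int_0^Lb=\alpha L$. $E_L$ is the set of positive $L$-periodic functions in $H^1_{loc}(\mathbb R)$. $-L_{\lambda,b}\psi=-\psi''+2\lambda\psi'-b\psi$ on $L$-periodic functions; its principal eigenfunction is a positive $L$-periodic $\psi$ with $-L_{\lambda,b}\psi=\mu(\lambda,b)\psi$ for the principal eigenvalue $\mu(\lambda,b)$. *)

(* Defs.v *)
From Stdlib Require Import Reals.
From Coquelicot Require Import Coquelicot.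
Open Scope R_scope.

Definition periodic (L : R) (f : R -> R) : Prop := forall x, f (x + L) = f x.

Definition C1 (f : R -> R) : Prop :=
  (forall x, ex_derive f x) /\ (forall x, continuous (Derive f) x).

Definition Lambda (L alpha : R) (b : R -> R) : Prop :=
  C1 b /\ (forall x, 0 <= b x) /\ periodic L b /\ RInt b 0 L = alpha * L.

Definition minus_L (lam : R) (b psi : R -> R) (x : R) : R :=
  - Derive (Derive psi) x + 2 * lam * Derive psi x - b x * psi x.

(* psi is a principal eigenfunction of -L_{lambda,b} on L-periodic functions:
   a positive L-periodic (classical, C^2) function psi with
   -L_{lambda,b} psi = mu psi for some mu (necessarily the principal
   eigenvalue mu(lambda,b), the only periodic eigenvalue with a positive
   eigenfunction). *)
Definition principal_eigenfunction (L lam : R) (b psi : R -> R) : Prop :=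
  (forall x, 0 < psi x) /\ periodic L psi /\
  (forall x, ex_derive psi x) /\ (forall x, ex_derive (Derive psi) x) /\
  exists mu : R, forall x, minus_L lam b psi x = mu * psi x.

(* Main.v *)
Require Import Defs.
From Stdlib Require Import Reals Lra ZArith.
From Coquelicot Require Import Coquelicot.
Open Scope R_scope.

Lemma cont_pt (f : R -> R) x : continuous f x -> continuity_pt f x.
Proof. intro H. apply continuity_pt_filterlim. exact H. Qed.

Lemma per_nat (L : R) (f : R -> R) : (forall x, f (x + L) = f x) ->
  forall (n : nat) x, f (x + INR n * L) = f x.
Proof.
  intros Hp n; induction n as [|n IH]; intro x.
  - simpl. f_equal; ring.
  - rewrite S_INR. replace (x + (INR n + 1) * L) with ((x + INR n * L) + L) by ring.
    rewrite Hp. apply IH.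
Qed.

Lemma per_Z (L : R) (f : R -> R) : (forall x, f (x + L) = f x) ->
  forall (k : Z) x, f (x + IZR k * L) = f x.
Proof.
  intros Hp k x. destruct k as [|p|p].
  - simpl. f_equal; ring.
  - rewrite <- positive_nat_Z, <- INR_IZR_INZ. apply per_nat; auto.
  - rewrite <- Pos2Z.opp_pos, <- positive_nat_Z, opp_IZR, <- INR_IZR_INZ.
    rewrite <- (per_nat L f Hp (Pos.to_nat p) (x + - INR (Pos.to_nat p) * L)).
    f_equal; ring.
Qed.

Lemma per_shift (L : R) (f : R -> R) : 0 < L -> (forall x, f (x + L) = f x) ->
  forall x a, exists x', a <= x' <= a + L /\ f x' = f x.
Proof.
  intros HL Hp x a.
  destruct (archimed ((x - a)/L)) as [H1 H2].
  set (z := up ((x - a)/L)) in *.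
  exists (x + IZR (1 - z) * L). split.
  - rewrite minus_IZR.
    assert (E : x + (1 - IZR z) * L - a = L * ((x - a)/L - IZR z + 1)) by (field; lra).
    assert (0 <= L * ((x - a)/L - IZR z + 1)) by (apply Rmult_le_pos; lra).
    assert (L * ((x - a)/L - IZR z + 1) <= L * 1) by (apply Rmult_le_compat_l; lra).
    split; lra.
  - apply per_Z; auto.
Qed.

Lemma per_max (L : R) (f : R -> R) : 0 < L -> (forall x, f (x + L) = f x) ->
  (forall x, continuous f x) -> exists x0, forall x, f x <= f x0.
Proof.
  intros HL Hp Hc.
  destruct (continuity_ab_maj f 0 L) as [M [HM _]]; [lra| intros; apply cont_pt; auto|].
  exists M. intro x. destruct (per_shift L f HL Hp x 0) as [x' [Hx' E]].
  rewrite <- E. apply HM. lra.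
Qed.

Lemma per_min (L : R) (f : R -> R) : 0 < L -> (forall x, f (x + L) = f x) ->
  (forall x, continuous f x) -> exists x0, forall x, f x0 <= f x.
Proof.
  intros HL Hp Hc.
  destruct (per_max L (fun x => - f x) HL) as [M HM].
  - intro x; rewrite Hp; auto.
  - intro x. apply (continuous_opp f). auto.
  - exists M; intro x; specialize (HM x); lra.
Qed.

Lemma deriv_max (f : R -> R) x0 d : is_derive f x0 d -> (forall x, f x <= f x0) -> d = 0.
Proof.
  intros Hd Hm. apply is_derive_Reals in Hd.
  set (pr := exist (fun l => derivable_pt_lim f x0 l) d Hd : derivable_pt f x0).
  assert (E : derive_pt f x0 pr = d) by reflexivity.
  rewrite <- E. apply (deriv_maximum f (x0 - 1) (x0 + 1)); try lra.
  intros; apply Hm.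
Qed.

Lemma deriv_min (f : R -> R) x0 d : is_derive f x0 d -> (forall x, f x0 <= f x) -> d = 0.
Proof.
  intros Hd Hm. assert (- d = 0); [|lra].
  apply (deriv_max (fun x => - f x) x0). 
  - apply (is_derive_opp f x0 d) in Hd. exact Hd.
  - intro x; specialize (Hm x); lra.
Qed.

Lemma mono (g dg : R -> R) : (forall x, is_derive g x (dg x)) -> (forall x, 0 <= dg x) ->
  forall a c, a <= c -> g a <= g c.
Proof.
  intros Hd Hp a c Hac.
  destruct (MVT_gen g a c dg) as [z [_ E]].
  - intros; apply Hd.
  - intros x _; apply cont_pt. apply (ex_derive_continuous (K:=R_AbsRing) g). exists (dg x); apply Hd.
  - assert (0 <= dg z * (c - a)) by (apply Rmult_le_pos; [apply Hp|lra]). lra.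
Qed.

Theorem mainTheorem17 (L alpha : R) (HL : 0 < L) (Halpha : 0 < alpha) :
  exists F : R, 0 < F /\
    forall (lam : R) (b psi : R -> R),
      0 <= lam -> Lambda L alpha b -> principal_eigenfunction L lam b psi ->
      forall x y : R, psi x / psi y <= F.
Proof.
  exists (exp (alpha * L * L)). split; [apply exp_pos|].
  intros lam b psi Hlam [[Hbd _] [Hb0 [Hbp Hint]]] [Hpos [Hpp [Hd1 [Hd2 [mu Heq]]]]].
  unfold minus_L in Heq.
  set (p := Derive psi) in *.
  set (p2 := Derive p) in *.
  assert (Hdpsi : forall x, is_derive psi x (p x)) by (intro; apply Derive_correct; auto).
  assert (Hdp : forall x, is_derive p x (p2 x)) by (intro; apply Derive_correct; auto).
  assert (Hcpsi : forall x, continuous psi x).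
  { intro x; apply (ex_derive_continuous (K:=R_AbsRing) (V:=R_NormedModule)); auto. }
  assert (Hcp : forall x, continuous p x).
  { intro x; apply (ex_derive_continuous (K:=R_AbsRing) (V:=R_NormedModule)); auto. }
  assert (Hcb : forall x, continuous b x).
  { intro x; apply (ex_derive_continuous (K:=R_AbsRing) (V:=R_NormedModule)); auto. }
  assert (Hpp' : forall x, p (x + L) = p x).
  { intro x.
    assert (H1 : is_derive (fun t => psi (t + L)) x (p (x + L))).
    { assert (H0 := is_derive_comp psi (fun t => t + L) x (p (x + L)) 1 (Hdpsi (x + L))).
      assert (Hl : is_derive (fun t : R => t + L) x 1).
      { auto_derive; auto; ring. }
      specialize (H0 Hl). simpl in H0. unfold scal in H0; simpl in H0.
      unfold mult in H0; simpl in H0. rewrite Rmult_1_l in H0. exact H0. }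
    assert (H2 : is_derive psi x (p (x + L))).
    { apply (is_derive_ext (fun t => psi (t + L))); auto. }
    symmetry. apply is_derive_unique in H2. exact H2. }
  set (v := fun x => p x / psi x).
  set (q := fun t => 2 * lam * t - mu - t * t).
  assert (Hdv : forall x, is_derive v x (q (v x) - b x)).
  { intro x. assert (Hn := Hpos x).
    assert (H := is_derive_div p psi x (p2 x) (p x) (Hdp x) (Hdpsi x) ltac:(lra)).
    replace (q (v x) - b x) with ((p2 x * psi x - p x * p x) / psi x ^ 2); [exact H|].
    unfold q, v. specialize (Heq x).
    replace (p2 x) with (2 * lam * p x - b x * psi x - mu * psi x) by lra.
    field. lra. }
  assert (Hvp : forall x, v (x + L) = v x).
  { intro x; unfold v; rewrite Hpp', Hpp; reflexivity. }
  assert (Hcv : forall x, continuous v x).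
  { intro x. apply (ex_derive_continuous (K:=R_AbsRing) (V:=R_NormedModule)).
    eexists; apply Hdv. }
  destruct (per_max L v HL Hvp Hcv) as [x1 Hx1].
  destruct (per_min L v HL Hvp Hcv) as [x2 Hx2].
  assert (Hq1 : 0 <= q (v x1)).
  { assert (E := deriv_max v x1 _ (Hdv x1) Hx1). specialize (Hb0 x1). lra. }
  assert (Hq2 : 0 <= q (v x2)).
  { assert (E := deriv_min v x2 _ (Hdv x2) Hx2). specialize (Hb0 x2). lra. }
  assert (Hq : forall x, 0 <= q (v x)).
  { intro x. specialize (Hx1 x). specialize (Hx2 x). unfold q in *.
    set (t := v x) in *. set (t1 := v x1) in *. set (t2 := v x2) in *.
    destruct (Req_dec t1 t2) as [E|E].
    - replace t with t1 by lra. lra.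
    - assert (Hid : (t1 - t2) * (2 * lam * t - mu - t * t) =
         (t - t2) * (2 * lam * t1 - mu - t1 * t1) + (t1 - t) * (2 * lam * t2 - mu - t2 * t2)
         + (t1 - t2) * ((t - t2) * (t1 - t))) by ring.
      assert (0 <= (t - t2) * (2 * lam * t1 - mu - t1 * t1)) by (apply Rmult_le_pos; lra).
      assert (0 <= (t1 - t) * (2 * lam * t2 - mu - t2 * t2)) by (apply Rmult_le_pos; lra).
      assert (0 <= (t1 - t2) * ((t - t2) * (t1 - t))) by
        (apply Rmult_le_pos; [lra| apply Rmult_le_pos; lra]).
      assert (Hpos' : 0 < t1 - t2) by lra.
      destruct (Rle_or_lt 0 (2 * lam * t - mu - t * t)) as [|Hn]; auto.
      assert ((t1 - t2) * (2 * lam * t - mu - t * t) < 0) by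
        (apply Rmult_pos_neg; lra). lra. }
  set (B := fun x => RInt b 0 x).
  assert (HdB : forall x, is_derive B x (b x)).
  { intro x. apply (is_derive_RInt b B 0 x); [|apply Hcb].
    apply filter_forall; intro y. apply (RInt_correct (V:=R_CompleteNormedModule)). apply (ex_RInt_continuous (V:=R_CompleteNormedModule)).
    intros; apply Hcb. }
  assert (HBL : forall x, B (x + L) - B x = alpha * L).
  { set (h := fun x => B (x + L) - B x).
    assert (Hdh : forall x, is_derive h x 0).
    { intro x. unfold h.
      assert (H0 := is_derive_comp B (fun t => t + L) x (b (x + L)) 1 (HdB (x + L))).
      assert (Hl : is_derive (fun t : R => t + L) x 1) by (auto_derive; auto; ring).
      specialize (H0 Hl). unfold scal in H0; simpl in H0; unfold mult in H0; simpl in H0.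
      rewrite Rmult_1_l in H0.
      replace 0 with (b (x + L) - b x) by (rewrite Hbp; ring).
      apply (is_derive_minus (fun t => B (t + L)) B); auto. }
    assert (Hh0 : h 0 = alpha * L).
    { unfold h, B. rewrite Rplus_0_l, RInt_point, Hint. unfold zero; simpl; ring. }
    intro x. fold (h x). rewrite <- Hh0.
    assert (Hm1 := mono h (fun _ => 0) Hdh (fun _ => Rle_refl 0)).
    assert (Hdh' : forall x, is_derive (fun t => - h t) x 0).
    { intro y. replace 0 with (- 0) by ring. apply (is_derive_opp h). auto. }
    assert (Hm2 := mono (fun t => - h t) (fun _ => 0) Hdh' (fun _ => Rle_refl 0)).
    destruct (Rle_or_lt 0 x).
    - specialize (Hm1 0 x H); specialize (Hm2 0 x H); simpl in *; lra.
    - specialize (Hm1 x 0 ltac:(lra)); specialize (Hm2 x 0 ltac:(lra)); simpl in *; lra. }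
  assert (Hosc : v x1 - v x2 <= alpha * L).
  { destruct (per_shift L v HL Hvp x2 x1) as [x2' [Hr E]].
    set (g := fun x => v x + B x).
    assert (Hdg : forall x, is_derive g x (q (v x))).
    { intro x. replace (q (v x)) with ((q (v x) - b x) + b x) by ring.
      apply (is_derive_plus v B); auto. }
    assert (G := mono g _ Hdg Hq x1 x2' ltac:(lra)).
    assert (G2 := mono B b HdB Hb0 x2' (x1 + L) ltac:(lra)).
    specialize (HBL x1). unfold g in G. lra. }
  destruct (per_max L psi HL Hpp Hcpsi) as [xm Hxm].
  destruct (per_min L psi HL Hpp Hcpsi) as [xn Hxn].
  assert (Hv0 : v xm = 0).
  { unfold v. rewrite (deriv_max psi xm _ (Hdpsi xm) Hxm). unfold Rdiv; ring. }
  assert (Hvb : forall x, - (alpha * L) <= v x).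
  { intro x. specialize (Hx2 x). specialize (Hx1 xm). lra. }
  destruct (per_shift L psi HL Hpp xn xm) as [xn' [Hr E]].
  assert (Hdl : forall x, is_derive (fun t => ln (psi t)) x (v x)).
  { intro x. assert (H0 := is_derive_comp ln psi x _ _ (is_derive_ln _ (Hpos x)) (Hdpsi x)).
    unfold scal in H0; simpl in H0; unfold mult in H0; simpl in H0.
    unfold v. replace (p x / psi x) with (p x * / psi x) by reflexivity. exact H0. }
  destruct (MVT_gen (fun t => ln (psi t)) xm xn' v) as [c [Hc Ec]].
  { intros; apply Hdl. }
  { intros x _; apply cont_pt. apply (ex_derive_continuous (K:=R_AbsRing) (V:=R_NormedModule)).
    eexists; apply Hdl. }
  simpl in Ec. rewrite E in Ec.
  assert (Hlog : ln (psi xm) - ln (psi xn) <= alpha * L * L).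
  { specialize (Hvb c).
    assert (- (alpha * L) * (xn' - xm) <= v c * (xn' - xm)) by
      (apply Rmult_le_compat_r; lra).
    assert (alpha * L * (xn' - xm) <= alpha * L * L) by
      (apply Rmult_le_compat_l; [apply Rmult_le_pos|]; lra).
    lra. }
  intros x y.
  assert (Hpx := Hpos x). assert (Hpy := Hpos y). assert (Hpm := Hpos xm). assert (Hpn := Hpos xn).
  apply Rle_trans with (psi xm / psi xn).
  - apply Rle_trans with (psi xm / psi y).
    + apply Rmult_le_compat_r; [left; apply Rinv_0_lt_compat; lra| apply Hxm].
    + apply Rmult_le_compat_l; [lra|]. apply Rinv_le_contravar; auto.
  - replace (psi xm / psi xn) with (exp (ln (psi xm) - ln (psi xn))).
    + destruct (Rle_lt_or_eq_dec _ _ Hlog) as [Hl|Hl]; [left; apply exp_increasing; auto|rewrite Hl; lra].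
    + unfold Rminus; rewrite exp_plus, exp_Ropp, !exp_ln; auto.
Qed.
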